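(* Let $\mathcal{G}=\langle A_\alpha,B_\alpha:\alpha<\omega_1\rangle$ be a tight gap and let $X_\mathcal{G}$ be the space on $\omega\cup\{\infty\}$ in which points of $\omega$ are isolated and the neighborhood filter of $\infty$ is generated by the sets $B_\alpha\cup\{\infty\}$, $\alpha<\omega_1$. Then (1) an infinite set $E\subseteq\omega$ converges to $\infty$ if and only if there is $\alpha<\omega_1$ with $E\subseteq^*A_\alpha$; and (2) $X_\mathcal{G}$ is a Fréchet $\alpha_1$-space.
   Context: A tight gap is a sequence $\langle A_\alpha,B_\alpha:\alpha<\omega_1\rangle$ of infinite subsets of $\omega$ such that for all $\alpha<\beta$, $A_\alpha\subseteq^*A_\beta$, $B_\beta\subseteq^*B_\alpha$ and $A_\beta\subseteq^*B_\alpha$; if $E\subseteq^*B_\alpha$ for all $\alpha$ then $E\subseteq^*A_\beta$ for some $\beta$; and if $E\supseteq^*A_\alpha$ for all $\alpha$ then $E\supseteq^*B_\beta$ for some $\beta$. Here $\subseteq^*$ means inclusion up to a finite set. An infinite $E\subseteq\omega$ converges to $\infty$ if every neighborhood of $\infty$ contains all but finitely many elements of $E$. A space is Fréchet if whenever $x\in\overline{A}$ some sequence in $A$ converges to $x$. A space is $\alpha_1$ if for every point $x$ and every countable family of sequences converging to $x$, there is a single sequence converging to $x$ which contains all but finitely many elements of each member of the family. *)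

(* Defs.v *)
From Stdlib Require Import List Arith.
Import ListNotations.

Definition nset := nat -> Prop.

(* A \subseteq^* B : A \ B is finite (equivalently, bounded) *)
Definition subset_star (A B : nset) : Prop :=
  exists N, forall n, N <= n -> A n -> B n.

Definition infinite_nset (A : nset) : Prop :=
  forall N, exists n, N <= n /\ A n.

(* ---------- omega_1, up to order isomorphism ----------
   (I, lt) is a strict well-order, uncountable, all of whose proper initial
   segments are countable. *)
Definition countable_type (T : Type) : Prop :=
  exists f : T -> nat, forall x y, f x = f y -> x = y.

Record omega1_order (I : Type) (lt : I -> I -> Prop) : Prop := {
  o1_irrefl : forall a, ~ lt a a;
  o1_trans  : forall a b c, lt a b -> lt b c -> lt a c;
  o1_total  : forall a b, lt a b \/ a = b \/ lt b a;
  o1_wf     : well_founded lt;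
  o1_uncountable : ~ countable_type I;
  o1_segments_countable : forall b, countable_type {a : I | lt a b}
}.

Record tight_gap (I : Type) (lt : I -> I -> Prop) (A B : I -> nset) : Prop := {
  tg_A_inf : forall a, infinite_nset (A a);
  tg_B_inf : forall a, infinite_nset (B a);
  tg_A_incr : forall a b, lt a b -> subset_star (A a) (A b);
  tg_B_decr : forall a b, lt a b -> subset_star (B b) (B a);
  tg_AB     : forall a b, lt a b -> subset_star (A b) (B a);
  tg_tight_below : forall E : nset,
      (forall a, subset_star E (B a)) -> exists b, subset_star E (A b);
  tg_tight_above : forall E : nset,
      (forall a, subset_star (A a) E) -> exists b, subset_star (B b) E
}.

Section Topo.
Variable T : Type.
Variable is_open : (T -> Prop) -> Prop.

Definition in_closure (S : T -> Prop) (x : T) : Prop :=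
  forall U, is_open U -> U x -> exists y, U y /\ S y.

Definition seq_converges (s : nat -> T) (x : T) : Prop :=
  forall U, is_open U -> U x -> exists N, forall n, N <= n -> U (s n).

Definition finite_set (S : T -> Prop) : Prop :=
  exists l : list T, forall t, S t -> In t l.

Definition frechet : Prop :=
  forall (S : T -> Prop) (x : T), in_closure S x ->
    exists s : nat -> T, (forall n, S (s n)) /\ seq_converges s x.

Definition alpha1 : Prop :=
  forall (x : T) (sig : nat -> nat -> T),
    (forall k, seq_converges (sig k) x) ->
    exists s : nat -> T, seq_converges s x /\
      forall k, finite_set (fun t => (exists n, sig k n = t) /\
                                     ~ (exists m, s m = t)).
End Topo.

(* ---------- the space X_G on omega \cup {infty} ----------
   Points: option nat, with None = infty.  Points of omega are isolated; the
   neighbourhood filter of infty is generated by the sets B_a \cup {infty}: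
   a set U is open iff, whenever infty \in U, U contains a finite intersection
   of sets B_a \cup {infty}. *)
Definition XG_open (I : Type) (B : I -> nset) (U : option nat -> Prop) : Prop :=
  U None -> exists l : list I,
    forall n, (forall a, In a l -> B a n) -> U (Some n).

Definition converges_to_infty (I : Type) (B : I -> nset) (E : nset) : Prop :=
  forall U, XG_open I B U -> U None -> subset_star E (fun n => U (Some n)).

(* Main.v *)
Require Import Defs.
From Stdlib Require Import List Arith Lia Classical ClassicalEpsilon IndefiniteDescription Cantor.
Import ListNotations.

Lemma ss_trans (X Y Z : nset) : subset_star X Y -> subset_star Y Z -> subset_star X Z.
Proof.
  intros [N1 H1] [N2 H2]. exists (max N1 N2). intros n Hn Hx.
  apply H2; [lia|]. apply H1; [lia|exact Hx].
Qed.

Lemma fchoice {X : Type} (P : nat -> X -> Prop) :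
  (forall k, exists x, P k x) -> exists f : nat -> X, forall k, P k (f k).
Proof.
  intros H. exists (fun k => proj1_sig (constructive_indefinite_description _ (H k))).
  intro k. exact (proj2_sig (constructive_indefinite_description _ (H k))).
Qed.

Lemma bound_lemma (I : Type) (lt : I -> I -> Prop) (Hw1 : omega1_order I lt)
  (g : nat -> I) : exists c, forall k, lt (g k) c.
Proof.
  apply NNPP; intro Hn.
  assert (Hall : forall c, exists k, c = g k \/ lt c (g k)).
  { intro c. apply NNPP; intro Hc. apply Hn. exists c. intro k.
    destruct (o1_total _ _ Hw1 (g k) c) as [H|[H|H]]; auto.
    - exfalso; apply Hc; exists k; auto.
    - exfalso; apply Hc; exists k; auto. }
  assert (HF : forall b, {f : {a : I | lt a b} -> nat | forall x y, f x = f y -> x = y}).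
  { intro b. apply constructive_indefinite_description. exact (o1_segments_countable _ _ Hw1 b). }
  set (Fk := fun j x => match excluded_middle_informative (lt x (g j)) with
                        | left H => S (proj1_sig (HF (g j)) (exist _ x H))
                        | right _ => 0 end).
  assert (HFk : forall j x y, (x = g j \/ lt x (g j)) -> (y = g j \/ lt y (g j)) ->
                Fk j x = Fk j y -> x = y).
  { intros j x y Hx Hy. unfold Fk.
    destruct (excluded_middle_informative (lt x (g j))) as [H1|H1];
    destruct (excluded_middle_informative (lt y (g j))) as [H2|H2]; intro E.
    - injection E as E. apply (proj2_sig (HF (g j))) in E.
      exact (f_equal (@proj1_sig _ _) E).
    - discriminate.
    - discriminate.
    - destruct Hx as [Hx|Hx]; [|contradiction]. destruct Hy as [Hy|Hy]; [|contradiction].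
      congruence. }
  set (kx := fun x => proj1_sig (constructive_indefinite_description _ (Hall x))).
  assert (Hkx : forall x, x = g (kx x) \/ lt x (g (kx x))).
  { intro x. exact (proj2_sig (constructive_indefinite_description _ (Hall x))). }
  apply (o1_uncountable _ _ Hw1).
  exists (fun x => to_nat (kx x, Fk (kx x) x)).
  intros x y E.
  apply (f_equal of_nat) in E. rewrite !cancel_of_to in E.
  injection E as E1 E2. rewrite <- E1 in E2.
  apply (HFk (kx x)); auto. rewrite E1; auto.
Qed.

Lemma above (I : Type) (lt : I -> I -> Prop) (Hw1 : omega1_order I lt) (a b : I) :
  exists c, lt a c /\ lt b c.
Proof.
  destruct (bound_lemma I lt Hw1 (fun k => match k with 0 => a | _ => b end)) as [c Hc].
  exists c. split; [exact (Hc 0)|exact (Hc 1)].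
Qed.

Lemma L0 (I : Type) (lt : I -> I -> Prop) (A B : I -> nset)
    (Hw1 : omega1_order I lt) (HG : tight_gap I lt A B) a b :
  subset_star (A a) (B b).
Proof.
  destruct (above I lt Hw1 a b) as [c [H1 H2]].
  apply ss_trans with (A c). apply (tg_A_incr _ _ _ _ HG); auto.
  apply (tg_AB _ _ _ _ HG); auto.
Qed.

Lemma L1 (I : Type) (lt : I -> I -> Prop) (A B : I -> nset)
    (Hw1 : omega1_order I lt) (HG : tight_gap I lt A B) a (l : list I) :
  subset_star (A a) (fun n => forall b, In b l -> B b n).
Proof.
  induction l as [|b l IH].
  - exists 0. intros n _ _ b [].
  - destruct IH as [N1 H1]. destruct (L0 I lt A B Hw1 HG a b) as [N2 H2].
    exists (max N1 N2). intros n Hn Ha b' [<-|Hb'].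
    + apply H2; [lia|auto].
    + apply H1; [lia|auto|auto].
Qed.

Lemma maxbound (h : nat -> nat) N : exists M, forall i, i < N -> h i < M.
Proof.
  induction N as [|N [M HM]].
  - exists 0; intros; lia.
  - exists (S (max M (h N))). intros i Hi.
    destruct (Nat.eq_dec i N) as [->|]; [lia|]. specialize (HM i ltac:(lia)). lia.
Qed.

Lemma listlemma (I : Type) (B : I -> nset) (E : nset) :
  (forall n, E n -> exists a, ~ B a n) ->
  forall M, exists l, forall n, n < M -> E n -> exists a, In a l /\ ~ B a n.
Proof.
  intros HE M. induction M as [|M [l Hl]].
  - exists []. intros; lia.
  - destruct (classic (E M)) as [HM|HM].
    + destruct (HE M HM) as [a Ha]. exists (a :: l). intros n Hn En.
      destruct (Nat.eq_dec n M) as [->|].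
      * exists a; split; [left; auto|auto].
      * destruct (Hl n ltac:(lia) En) as [a' [H1 H2]]. exists a'; split; [right; auto|auto].
    + exists l. intros n Hn En. destruct (Nat.eq_dec n M) as [->|]; [contradiction|].
      apply Hl; auto; lia.
Qed.

Theorem mainTheorem7 (I : Type) (lt : I -> I -> Prop) (A B : I -> nset)
    (Hw1 : omega1_order I lt) (HG : tight_gap I lt A B) :
  (forall E : nset, infinite_nset E ->
     (converges_to_infty I B E <-> exists a : I, subset_star E (A a)))
  /\ frechet (option nat) (XG_open I B)
  /\ alpha1 (option nat) (XG_open I B).
Proof.
  split; [|split].
  - intros E _. split.
    + intro Hc. apply (tg_tight_below _ _ _ _ HG). intro a.
      apply (Hc (fun p => match p with None => True | Some n => B a n end)); [|exact Logic.I].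
      intros _. exists [a]. intros n Hn. apply Hn. left; auto.
    + intros [a Ha] U HU HN. destruct (HU HN) as [l Hl].
      apply ss_trans with (A a); auto.
      destruct (L1 I lt A B Hw1 HG a l) as [N HNl]. exists N. intros n Hn Han.
      apply Hl. apply HNl; auto.
  - intros S x Hcl. destruct x as [m|].
    + destruct (Hcl (fun p => p = Some m)) as [y [-> Hy]]; auto.
      { intro H; discriminate. }
      exists (fun _ => Some m). split; auto. intros U _ HU. exists 0; auto.
    + destruct (classic (S None)) as [SN|SN].
      { exists (fun _ => None). split; auto. intros U _ HU. exists 0; auto. }
      set (E := fun n => S (Some n)).
      destruct (classic (exists a, forall N, exists n, N <= n /\ E n /\ A a n)) as [[a Ha]|Hna].
      * destruct (fchoice (fun k n => k <= n /\ E n /\ A a n) Ha) as [f Hf].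
        exists (fun k => Some (f k)). split.
        { intro n; apply (Hf n). }
        intros U HU HN. destruct (HU HN) as [l Hl].
        destruct (L1 I lt A B Hw1 HG a l) as [N HNl]. exists N. intros k Hk.
        apply Hl. destruct (Hf k) as [H1 [H2 H3]]. apply HNl; auto; lia.
      * assert (Hab : forall a, subset_star (A a) (fun n => ~ E n)).
        { intro a. apply NNPP; intro H1. apply Hna. exists a. intro N.
          apply NNPP; intro H2. apply H1. exists N. intros n Hn Han En.
          apply H2. exists n; auto. }
        destruct (tg_tight_above _ _ _ _ HG _ Hab) as [b [N Hb]].
        destruct (classic (exists n, E n /\ forall a, B a n)) as [[n [En Hn]]|HnK].
        -- exists (fun _ => Some n). split; auto. intros U HU HN.
           destruct (HU HN) as [l Hl]. exists 0. intros; apply Hl; auto.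
        -- assert (HE : forall n, E n -> exists a, ~ B a n).
           { intros n En. apply NNPP; intro H. apply HnK. exists n. split; auto.
             intro a. apply NNPP; intro H'. apply H; exists a; auto. }
           destruct (listlemma I B E HE N) as [l Hl].
           exfalso.
           destruct (Hcl (fun p => match p with None => True
                                  | Some n => forall a, In a (b :: l) -> B a n end))
             as [y [Uy Sy]].
           { intros _. exists (b :: l). auto. }
           { exact Logic.I. }
           destruct y as [n|]; [|contradiction].
           destruct (le_lt_dec N n) as [Hn|Hn].
           ++ apply (Hb n Hn); [apply Uy; left; auto|exact Sy].
           ++ destruct (Hl n Hn Sy) as [a [Ha1 Ha2]]. apply Ha2, Uy. right; auto.
  - intros x sig Hsig. destruct x as [m|].
    + exists (fun _ => Some m). split.
      { intros U _ HU. exists 0; auto. }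
      intro k. destruct (Hsig k (fun p => p = Some m)) as [N HN]; auto.
      { intro H; discriminate. }
      exists (map (sig k) (seq 0 N)). intros t [[n <-] Hs].
      destruct (le_lt_dec N n) as [Hn|Hn].
      * exfalso. apply Hs. exists 0. symmetry; apply HN; auto.
      * apply in_map. apply in_seq. lia.
    + assert (Hk : forall k, exists a,
        subset_star (fun n => exists i, sig k i = Some n) (A a)).
      { intro k. apply (tg_tight_below _ _ _ _ HG). intro a.
        destruct (Hsig k (fun p => match p with None => True | Some n => B a n end))
          as [N HN].
        { intros _. exists [a]. intros n Hn. apply Hn. left; auto. }
        { exact Logic.I. }
        destruct (maxbound (fun i => match sig k i with Some n => n | None => 0 end) N)
          as [M HM].
        exists M. intros n Hn [i Hi].
        destruct (le_lt_dec N i) as [Hi'|Hi'].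
        - specialize (HN i Hi'). rewrite Hi in HN. exact HN.
        - specialize (HM i Hi'). rewrite Hi in HM. lia. }
      destruct (fchoice _ Hk) as [g Hg].
      destruct (bound_lemma I lt Hw1 g) as [c Hc].
      exists (fun m => match m with 0 => None
                      | S m => match excluded_middle_informative (A c m) with
                               | left _ => Some m | right _ => None end end).
      split.
      * intros U HU HN. destruct (HU HN) as [l Hl].
        destruct (L1 I lt A B Hw1 HG c l) as [N HNl]. exists (S N).
        intros [|m] Hm; [lia|].
        destruct (excluded_middle_informative (A c m)) as [Ha|Ha]; auto.
        apply Hl. apply HNl; auto; lia.
      * intro k.
        assert (Hsub : subset_star (fun n => exists i, sig k i = Some n) (A c)).
        { apply ss_trans with (A (g k)); auto. apply (tg_A_incr _ _ _ _ HG); auto. }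
        destruct Hsub as [N HN].
        exists (map Some (seq 0 N)). intros t [[i <-] Hs].
        destruct (sig k i) as [n|] eqn:E.
        -- destruct (le_lt_dec N n) as [Hn|Hn].
           ++ exfalso. apply Hs. exists (S n).
              destruct (excluded_middle_informative (A c n)) as [Ha|Ha]; auto.
              exfalso; apply Ha, HN; eauto.
           ++ apply in_map, in_seq. lia.
        -- exfalso. apply Hs. exists 0. auto.
Qed.
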